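(* Let $R$ be a generalized reductive root system in $\mathcal V$ and let $R_1\subseteq R$ with $R_1^\times:=R_1\cap R^\times\ne\emptyset$. Suppose that (a) $R_1=-R_1$; (b) $\{\delta\in R^0:\alpha'+\delta\in R_1\text{ for some }\alpha'\in R_1^\times\}\subseteq R_1$; (c) if $\alpha'\in R_1$, $\beta\in R$ and $(\alpha',\beta)\ne0$, then $\beta\in R_1$. Then $R_1$ is a generalized reductive root system in its real span (with the restricted form). Moreover, $R_1'=R_1^\times\cup(\langle R_1\rangle\cap R^0)$ is also a generalized reductive root system in the real span of $R_1$.
   Context: Let $\mathcal V$ be a nontrivial finite-dimensional real vector space with a nontrivial positive semidefinite symmetric bilinear form $(\cdot,\cdot)$. For $R\subseteq\mathcal V$ let $R^\times=\{\alpha\in R:(\alpha,\alpha)\ne0\}$, $R^0=\{\alpha\in R:(\alpha,\alpha)=0\}$, and $(\beta,\alpha^\vee)=2(\beta,\alpha)/(\alpha,\alpha)$. $R$ is a generalized reductive root system in $\mathcal V$ if: (R1) $R=-R$; (R2) $R$ spans $\mathcal V$; (R3) $R$ is discrete in $\mathcal V$; (R4) for $\alpha\in R^\times$ and $\beta\in R$ there are nonnegative integers $u,d$ such that for $n\in\mathbb Z$, $\beta+n\alpha\in R$ iff $-d\le n\le u$, and $d-u=(\beta,\alpha^\vee)$; (R5) $\alpha\in R^\times\Rightarrow2\alpha\notin R$. $\langle S\rangle$ denotes the $\mathbb Z$-span of $S$. *)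

(* Defs.v *)
From HB Require Import structures.
From mathcomp Require Import all_boot all_order all_algebra.
From mathcomp Require Import reals.
Set Implicit Arguments. Unset Strict Implicit. Unset Printing Implicit Defensive.
Import Order.TTheory GRing.Theory Num.Theory.
Local Open Scope ring_scope.

(* The ambient finite-dimensional real vector space is modelled as 'rV[R]_n;
   the symmetric bilinear form is given by a matrix A : (u,v) = u A v^T. *)
Definition bform {R : realType} {n : nat} (A : 'M[R]_n) (u v : 'rV[R]_n) : R :=
  (u *m A *m v^T) 0 0.

Definition rspan {R : realType} {n : nat} (S : 'rV[R]_n -> Prop) (v : 'rV[R]_n) : Prop :=
  exists (k : nat) (vs : 'I_k -> 'rV[R]_n) (cs : 'I_k -> R),
    (forall i, S (vs i)) /\ v = \sum_(i < k) cs i *: vs i.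

Definition zspan {R : realType} {n : nat} (S : 'rV[R]_n -> Prop) (v : 'rV[R]_n) : Prop :=
  exists (k : nat) (vs : 'I_k -> 'rV[R]_n) (cs : 'I_k -> int),
    (forall i, S (vs i)) /\ v = \sum_(i < k) vs i *~ cs i.

Definition coroot_pair {R : realType} {n : nat} (A : 'M[R]_n) (b a : 'rV[R]_n) : R :=
  2 * bform A b a / bform A a a.

Definition discrete_set {R : realType} {n : nat} (S : 'rV[R]_n -> Prop) : Prop :=
  forall a, S a -> exists e : R, 0 < e /\
    forall b, S b -> (forall i, `|b 0 i - a 0 i| < e) -> b = a.

(* S is a generalized reductive root system in the subspace W (with the form
   restricted to W). *)
Definition GRRS {R : realType} {n : nat} (A : 'M[R]_n)
    (W : 'rV[R]_n -> Prop) (S : 'rV[R]_n -> Prop) : Prop :=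
  (exists w, W w /\ w != 0) /\
      (exists u v, W u /\ W v /\ bform A u v != 0) /\
      (forall a, S a <-> S (- a)) /\
      (forall v, W v <-> rspan S v) /\
      discrete_set S /\
      (forall a b, S a -> bform A a a != 0 -> S b ->
                 exists u d : nat,
                   (forall k : int, S (b + a *~ k) <-> ((- (d%:Z) <= k) && (k <= u%:Z))%R)
                   /\ (d%:R - u%:R : R) = coroot_pair A b a) /\
      (forall a, S a -> bform A a a != 0 -> ~ S (2%:R *: a)).

(* Main.v *)
Require Import Defs.
From HB Require Import structures.
From mathcomp Require Import all_boot all_order all_algebra.
From mathcomp Require Import reals zify lra.
Import Order.TTheory GRing.Theory Num.Theory.
Local Open Scope ring_scope.
Section B.
Variables (R : realType) (n : nat) (A : 'M[R]_n).
Lemma bformDl u w v : bform A (u + w) v = bform A u v + bform A w v.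
Proof. by rewrite /bform !mulmxDl mxE. Qed.
Lemma bformDr u w v : bform A v (u + w) = bform A v u + bform A v w.
Proof. by rewrite /bform linearD /= mulmxDr mxE. Qed.
Lemma bformZl c u v : bform A (c *: u) v = c * bform A u v.
Proof. by rewrite /bform -!scalemxAl mxE. Qed.
Lemma bformZr c u v : bform A v (c *: u) = c * bform A v u.
Proof. by rewrite /bform linearZ /= -scalemxAr mxE. Qed.
Lemma bformNl u v : bform A (- u) v = - bform A u v.
Proof. by rewrite -scaleN1r bformZl mulN1r. Qed.
Lemma bformNr u v : bform A v (- u) = - bform A v u.
Proof. by rewrite -scaleN1r bformZr mulN1r. Qed.
Lemma bformBr u w v : bform A v (u - w) = bform A v u - bform A v w.
Proof. by rewrite bformDr bformNr. Qed.
Lemma bformBl u w v : bform A (u - w) v = bform A u v - bform A w v.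
Proof. by rewrite bformDl bformNl. Qed.
Lemma bformzr (k : int) u v : bform A v (u *~ k) = k%:~R * bform A v u.
Proof. by rewrite -scaler_int bformZr. Qed.
Lemma bform_sym : A^T = A -> forall u v, bform A u v = bform A v u.
Proof.
move=> As u v; rewrite /bform.
have H : forall M : 'M[R]_1, M 0 0 = M^T 0 0 by move=> M; rewrite mxE.
rewrite H.
by rewrite !trmx_mul trmxK As mulmxA.
Qed.
Implicit Types S T : 'rV[R]_n -> Prop.
Lemma rspan_in S v : S v -> rspan S v.
Proof. move=> Sv; rewrite /rspan; exists 1%N, (fun _ => v), (fun _ : 'I_1 => (1:R)). split=> //. by rewrite big_ord1 scale1r. Qed.
Lemma rspan0 S : rspan S 0.
Proof. by rewrite /rspan; exists 0%N, (fun _ : 'I_0 => (0:'rV[R]_n)), (fun _ : 'I_0 => (0:R)); split; [by case | by rewrite big_ord0]. Qed.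
Lemma rspanZ S c v : rspan S v -> rspan S (c *: v).
Proof.
move=> [k [vs [cs [H ->]]]]; rewrite /rspan; exists k, vs, (fun i : 'I_k => (c * cs i : R)); split=> //.
by rewrite scaler_sumr; apply: eq_bigr => i _; rewrite scalerA.
Qed.
Lemma rspanD S v w : rspan S v -> rspan S w -> rspan S (v + w).
Proof.
move=> [k1 [vs1 [cs1 [H1 ->]]]] [k2 [vs2 [cs2 [H2 ->]]]].
rewrite /rspan; exists (k1 + k2)%N, (fun i => match split i with inl j => vs1 j | inr j => vs2 j end),
  (fun i => match split i with inl j => cs1 j | inr j => cs2 j end).
split; first by move=> i; case: (split i).
rewrite big_split_ord /=.
have E1 : forall i, split (lshift k2 i) = inl i := fun i => unsplitK (inl i).
have E2 : forall i, split (rshift k1 i) = inr i := fun i => unsplitK (inr i).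
by congr (_ + _); apply: eq_bigr => i _; rewrite ?E1 ?E2.
Qed.
Lemma rspan_trans S T v : (forall w, S w -> rspan T w) -> rspan S v -> rspan T v.
Proof.
move=> HST [k [vs [cs [H ->]]]]; elim: k vs cs H => [|k IH] vs cs H.
  by rewrite big_ord0; apply: rspan0.
rewrite big_ord_recr /=; apply: rspanD; last by apply: rspanZ; apply: HST.
exact: (IH (fun i => vs (widen_ord (leqnSn k) i)) (fun i => cs (widen_ord (leqnSn k) i))).
Qed.
Lemma zspan_in S v : S v -> zspan S v.
Proof. move=> Sv; rewrite /zspan; exists 1%N, (fun _ => v), (fun _ : 'I_1 => (1:int)). split=> //. by rewrite big_ord1 mulr1z. Qed.
Lemma zspanD S v w : zspan S v -> zspan S w -> zspan S (v + w).
Proof.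
move=> [k1 [vs1 [cs1 [H1 ->]]]] [k2 [vs2 [cs2 [H2 ->]]]].
rewrite /zspan; exists (k1 + k2)%N, (fun i => match split i with inl j => vs1 j | inr j => vs2 j end),
  (fun i => match split i with inl j => cs1 j | inr j => cs2 j end).
split; first by move=> i; case: (split i).
rewrite big_split_ord /=.
have E1 : forall i, split (lshift k2 i) = inl i := fun i => unsplitK (inl i).
have E2 : forall i, split (rshift k1 i) = inr i := fun i => unsplitK (inr i).
by congr (_ + _); apply: eq_bigr => i _; rewrite ?E1 ?E2.
Qed.
Lemma zspanMz S v (z : int) : zspan S v -> zspan S (v *~ z).
Proof.
move=> [k [vs [cs [H ->]]]]; rewrite /zspan; exists k, vs, (fun i : 'I_k => (cs i * z : int)); split=> //.
by rewrite mulrz_suml; apply: eq_bigr => i _; rewrite mulrzA.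
Qed.
Lemma zspan_rspan S v : zspan S v -> rspan S v.
Proof.
move=> [k [vs [cs [H ->]]]]; rewrite /zspan; exists k, vs, (fun i : 'I_k => ((cs i)%:~R : R)); split=> //.
by apply: eq_bigr => i _; rewrite scaler_int.
Qed.
End B.

Theorem lemma2p1 (R : realType) (n : nat) (A : 'M[R]_n)
  (Asym : A^T = A) (Apsd : forall u : 'rV[R]_n, 0 <= bform A u u) (Anz : A != 0)
  (Rt R1 : 'rV[R]_n -> Prop)
  (HR : GRRS A (fun _ => True) Rt)
  (Hsub : forall v, R1 v -> Rt v)
  (Hne : exists a, R1 a /\ bform A a a != 0)
  (Ha : forall v, R1 v <-> R1 (- v))
  (Hb : forall d, Rt d -> bform A d d = 0 ->
          (exists a', R1 a' /\ bform A a' a' != 0 /\ R1 (a' + d)) -> R1 d)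
  (Hc : forall a' b, R1 a' -> Rt b -> bform A a' b != 0 -> R1 b) :
  GRRS A (rspan R1) R1 /\
  GRRS A (rspan R1)
    (fun v => (R1 v /\ bform A v v != 0) \/ (zspan R1 v /\ Rt v /\ bform A v v = 0)).
Proof.
have [_ [_ [RtN [_ [Rtdisc [Rt4 Rt5]]]]]] := HR.
have [a0 [R1a0 a0a0]] := Hne.
have a0nz : a0 != 0.
  apply/eqP => e; move: a0a0; rewrite e -(scale0r (0 : 'rV[R]_n)) bformZl mul0r eqxx.
  by [].
have step : forall e g, R1 e -> bform A e e != 0 -> Rt g -> R1 (g - e) ->
    bform A e g = 0 -> R1 g.
  move=> e g R1e ee Rtg R1ge eg; case: (eqVneq (bform A g g) 0) => gg.
    apply: (Hb g Rtg gg); exists (- e); split; first by apply/(Ha (- e)).2; rewrite opprK.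
    by split; [rewrite bformNl bformNr opprK | rewrite addrC].
  by apply: (Hc (g - e) g) => //; rewrite bformBl eg subr0.
have str : forall a b k, R1 a -> bform A a a != 0 -> R1 b -> Rt (b + a *~ k) ->
    R1 (b + a *~ k).
  move=> a b k R1a aa R1b Rtk.
  have [u [d [Hs _]]] := Rt4 a b (Hsub _ R1a) aa (Hsub _ R1b).
  have /andP [rg1 rg2] := (Hs k).1 Rtk.
  case: (eqVneq (bform A a (b + a *~ k)) 0) => [e0|]; last exact: Hc.
  case: (ltgtP k 0) => [kneg|kpos|->]; last by rewrite mulr0z addr0.
  - have E : b + a *~ (k + 1) = b + a *~ k - (- a) by rewrite opprK mulrzDr mulr1z addrA.
    have Rt1 : Rt (b + a *~ (k + 1)) by apply/Hs; apply/andP; split; lia.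
    have R11 : R1 (b + a *~ (k + 1)).
      apply: (Hc a) => //; rewrite E opprK bformDr e0 add0r //.
    apply: (step (- a)) => //; first by apply/(Ha (- a)).2; rewrite opprK.
      by rewrite bformNl bformNr opprK.
      by rewrite -E.
    by rewrite bformNl e0 oppr0.
  - have E : b + a *~ (k - 1) = b + a *~ k - a by rewrite mulrzBr mulr1z addrA.
    have Rt1 : Rt (b + a *~ (k - 1)) by apply/Hs; apply/andP; split; lia.
    have R11 : R1 (b + a *~ (k - 1)).
      apply: (Hc a) => //; rewrite E bformBr e0 sub0r oppr_eq0 //.
    by apply: (step a) => //; rewrite -E.
have rad : forall a b, bform A a a != 0 -> bform A b b = 0 -> bform A a b = 0.
  move=> a b aa bb.
  have xpos : 0 < bform A a a by rewrite lt_def aa Apsd.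
  have := Apsd (bform A a a *: b - bform A a b *: a).
  rewrite !(bformBl, bformBr, bformZl, bformZr) bb (@bform_sym R n A Asym b a).
  set x := bform A a a; set y := bform A a b => H.
  have H' : x * (y * y) <= 0.
    by move: H; rewrite mulr0 sub0r (mulrC y x) subrr mulr0 subr0 mulrN oppr_ge0.
  have Hy : y * y <= 0 by rewrite -(pmulr_rle0 _ xpos).
  have : y * y == 0 by rewrite eq_le Hy /= -expr2 sqr_ge0.
  by rewrite mulf_eq0 orbb => /eqP.
split.
  split; first by exists a0; split; [exact: rspan_in | ].
  split; first by exists a0, a0; split; [exact: rspan_in | split; [exact: rspan_in | ]].
  split; first exact: Ha.
  split; first by [].
  split.
    move=> x R1x; have [e [e0 He]] := Rtdisc x (Hsub _ R1x).
    by exists e; split => // y R1y; apply: He; apply: Hsub.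
  split.
    move=> a b R1a aa R1b.
    have [u [d [Hs Heq]]] := Rt4 a b (Hsub _ R1a) aa (Hsub _ R1b).
    exists u, d; split => // k; split => [/Hsub /Hs // | /Hs Rtk]; exact: str.
  by move=> a R1a aa /Hsub; apply: Rt5 => //; apply: Hsub.
set P := fun v => _ \/ _.
have PRt : forall v, P v -> Rt v by move=> v [[/Hsub] | [_ []]].
have R1P : forall v, R1 v -> P v.
  move=> v R1v; case: (eqVneq (bform A v v) 0) => vv; [right | left] => //.
  by split; [exact: zspan_in | split => //; exact: Hsub].
have Pz : forall v, P v -> zspan R1 v by move=> v [[/zspan_in] | []].
have PR1 : forall v, P v -> bform A v v != 0 -> R1 v.
  by move=> v [[] // | [_ [_ ->]]]; rewrite eqxx.
have PN : forall v, P v -> P (- v).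
  move=> v [[R1v vv] | [zv [Rtv vv]]]; [left | right].
    by rewrite bformNl bformNr opprK; split => //; exact: (Ha v).1.
  rewrite bformNl bformNr opprK; split; last by split => //; exact: (RtN v).1.
  by rewrite -mulrN1z; apply: zspanMz.
split; first by exists a0; split; [exact: rspan_in | ].
split; first by exists a0, a0; split; [exact: rspan_in | split; [exact: rspan_in | ]].
split; first by move=> v; split => [/PN // | /PN]; rewrite opprK.
split.
  move=> v; split; apply: rspan_trans => w.
    by move=> /R1P; apply: rspan_in.
  by move=> /Pz; apply: zspan_rspan.
split.
  move=> x Px; have [e [e0 He]] := Rtdisc x (PRt _ Px).
  by exists e; split => // y Py; apply: He; apply: PRt.
split.
  move=> a b Pa aa Pb; have R1a := PR1 a Pa aa.
  have [u [d [Hs Heq]]] := Rt4 a b (Hsub _ R1a) aa (PRt _ Pb).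
  exists u, d; split => // k; split => [/PRt /Hs // | /Hs Rtk].
  case: (eqVneq (bform A (b + a *~ k) (b + a *~ k)) 0) => gg.
    right; split; last by [].
    by apply: zspanD; [exact: Pz | apply: zspanMz; exact: zspan_in].
  left; split => //.
  case: Pb => [[R1b _] | [_ [_ bb]]]; first exact: str.
  case: (eqVneq (bform A a (b + a *~ k)) 0) => [e0|]; last exact: Hc.
  move: e0; rewrite bformDr bformzr (rad a b aa bb) add0r => /eqP.
  rewrite mulf_eq0 (negbTE aa) orbF intr_eq0 => /eqP k0.
  by move: gg; rewrite k0 mulr0z addr0 bb eqxx.
by move=> a Pa aa /PRt; apply: Rt5 => //; apply: PRt.
Qed.
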